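(* Let $G$ be the alternating group $A_4$ on $4$ elements (a group of order $12$). Then there do not exist subsets $A_1, A_2, A_3 \subseteq G$ with $\mathrm{card}(A_1)=2$, $\mathrm{card}(A_2)=3$, $\mathrm{card}(A_3)=2$ such that the multiplication map $A_1\times A_2\times A_3\to G$, $(a_1,a_2,a_3)\mapsto a_1a_2a_3$, is a bijection. *)

(* Defs.v *)
From mathcomp Require Import all_boot all_order all_fingroup all_solvable alt.
Set Implicit Arguments. Unset Strict Implicit. Unset Printing Implicit Defensive.

Definition A4 : {set {perm 'I_4}} := Alt ('I_4).

Definition mul3_bijective (gT : finGroupType) (G A1 A2 A3 : {set gT}) : Prop :=
  [/\ (forall a1 a2 a3, a1 \in A1 -> a2 \in A2 -> a3 \in A3 ->
         (a1 * a2 * a3)%g \in G),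
      (forall g, g \in G -> exists a1 a2 a3,
         [/\ a1 \in A1, a2 \in A2, a3 \in A3 & g = (a1 * a2 * a3)%g]) &
      (forall a1 a2 a3 b1 b2 b3,
         a1 \in A1 -> a2 \in A2 -> a3 \in A3 ->
         b1 \in A1 -> b2 \in A2 -> b3 \in A3 ->
         (a1 * a2 * a3)%g = (b1 * b2 * b3)%g ->
         [/\ a1 = b1, a2 = b2 & a3 = b3])].

(* Main.v *)
Require Import Defs.
From mathcomp Require Import all_boot all_order all_fingroup all_solvable alt.
Open Scope group_scope.
Definition o0 : 'I_4 := @Ordinal 4 0 isT.
Definition o1 : 'I_4 := @Ordinal 4 1 isT.
Definition o2 : 'I_4 := @Ordinal 4 2 isT.
Definition o3 : 'I_4 := @Ordinal 4 3 isT.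
Definition code (s : {perm 'I_4}) : seq nat := [:: val (s o0); val (s o1); val (s o2); val (s o3)].
Definition cmul (u v : seq nat) : seq nat := [seq nth 0%N v k | k <- u].

Lemma ord4_cases (i : 'I_4) : [\/ i = o0, i = o1, i = o2 | i = o3].
Proof.
case: i => [[|[|[|[|m]]]] Hi].
- by constructor 1; apply: val_inj.
- by constructor 2; apply: val_inj.
- by constructor 3; apply: val_inj.
- by constructor 4; apply: val_inj.
- by [].
Qed.

Lemma code_inj : injective code.
Proof.
move=> s t [h0 h1 h2 h3]; apply/permP => i.
by case: (ord4_cases i) => ->; apply: val_inj.
Qed.

Lemma nth_code t (i : 'I_4) : nth 0%N (code t) (val i) = val (t i).
Proof. by case: (ord4_cases i) => ->. Qed.

Lemma codeM s t : code (s * t) = cmul (code s) (code t).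
Proof. by rewrite /code /cmul /= !permM !nth_code. Qed.

Lemma code1 : code 1 = [:: 0; 1; 2; 3]%N.
Proof. by rewrite /code !perm1. Qed.

Lemma codeT (a b : 'I_4) : code (tperm a b) =
  [seq val (if i == a then b else if i == b then a else i) | i <- [:: o0; o1; o2; o3]].
Proof. by rewrite /code /= !permE. Qed.

Definition tt2 (a b c d : 'I_4) : {perm 'I_4} := tperm a b * tperm c d.
Definition LP : seq {perm 'I_4} :=
  [:: tt2 o0 o1 o0 o1; tt2 o0 o1 o2 o3; tt2 o0 o2 o1 o3; tt2 o0 o3 o1 o2;
      tt2 o0 o1 o1 o2; tt2 o0 o2 o2 o1; tt2 o0 o1 o1 o3; tt2 o0 o3 o3 o1;
      tt2 o0 o2 o2 o3; tt2 o0 o3 o3 o2; tt2 o1 o2 o2 o3; tt2 o1 o3 o3 o2].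
Definition LC : seq (seq nat) :=
 [:: [:: 0; 1; 2; 3]; [:: 1; 0; 3; 2]; [:: 2; 3; 0; 1]; [:: 3; 2; 1; 0]; [:: 2; 0; 1; 3]; [:: 1; 2; 0; 3]; [:: 3; 0; 2; 1]; [:: 1; 3; 2; 0]; [:: 3; 1; 0; 2]; [:: 2; 1; 3; 0]; [:: 0; 3; 1; 2]; [:: 0; 2; 3; 1]]%N.

Lemma codeLP : map code LP = LC.
Proof. rewrite /= /tt2 !codeM !codeT. vm_compute. reflexivity. Qed.

Lemma LP_A4 : {subset LP <= A4}.
Proof.
apply/allP.
by rewrite /= /A4 !Alt_even /tt2 !odd_permM !odd_tperm.
Qed.

Lemma card_A4 : #|A4| = 12%N.
Proof.
have := card_Alt (T:='I_4). rewrite card_ord /A4 => /(_ isT).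
move=> h; apply/eqP; rewrite -(eqn_pmul2l (isT : 0 < 2)%N) h //.
Qed.

Lemma A4_LP s : s \in A4 -> code s \in LC.
Proof.
move=> hs; rewrite -codeLP map_f //.
have uLP : uniq LP by rewrite -(map_inj_uniq code_inj) codeLP.
have cLP : #|LP| = 12%N by rewrite (card_uniqP uLP).
have sub : LP \subset A4 by apply/subsetP; exact: LP_A4.
have := subset_cardP (etrans cLP (esym card_A4)) sub.
by move=> /(_ s); rewrite hs.
Qed.

Definition id4 : seq nat := [:: 0; 1; 2; 3]%N.
Definition j0 : 'I_3 := @Ordinal 3 0 isT.
Definition j1 : 'I_3 := @Ordinal 3 1 isT.
Definition j2 : 'I_3 := @Ordinal 3 2 isT.
Definition Ts : seq (bool * 'I_3 * bool) :=
  [:: (false, j0, false); (false, j0, true); (false, j1, false); (false, j1, true); (false, j2, false); (false, j2, true); (true, j0, false); (true, j0, true); (true, j1, false); (true, j1, true); (true, j2, false); (true, j2, true)].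
Definition Gc (x y a b c : seq nat) (t : bool * 'I_3 * bool) : seq nat :=
  cmul (cmul (if t.1.1 then x else id4) (nth [::] [:: a; b; c] t.1.2)) (if t.2 then y else id4).
Definition keyb := all (fun x => all (fun y => all (fun a => all (fun b => all (fun c =>
    ~~ uniq (map (Gc x y a b c) Ts)) LC) LC) LC) LC) LC.
Lemma keyP : keyb. Proof. Time vm_compute. reflexivity. Qed.

Definition Gp (x y a b c : {perm 'I_4}) (t : bool * 'I_3 * bool) : {perm 'I_4} :=
  (if t.1.1 then x else 1) * nth 1 [:: a; b; c] t.1.2 * (if t.2 then y else 1).

Lemma codeG x y a b c t : code (Gp x y a b c t) = Gc (code x) (code y) (code a) (code b) (code c) t.
Proof.
case: t => [[i j] k]; rewrite /Gp /Gc !codeM.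
by case: i; case: k; case: j => [[|[|[|m]]] Hj] //; rewrite ?code1.
Qed.

Lemma inA4 (g h : {perm 'I_4}) : g \in A4 -> h \in A4 -> g^-1 * h \in A4 /\ g * h^-1 \in A4.
Proof. by rewrite /A4 => hg hh; rewrite !groupM ?groupV. Qed.

Theorem proposition1p3 :
  ~ exists A1 A2 A3 : {set {perm 'I_4}},
      [/\ [/\ A1 \subset A4, A2 \subset A4 & A3 \subset A4],
          [/\ #|A1| = 2, #|A2| = 3 & #|A3| = 2] &
          mul3_bijective A4 A1 A2 A3].
Proof.
move=> [A1 [A2 [A3 [[s1 s2 s3] [c1 c2 c3] [_ _ inj]]]]].
move/eqP: c1 => /cards2P [p [q [npq eA1]]].
move/eqP: c3 => /cards2P [r [s [nrs eA3]]].
have hp : p \in A4 by apply: (subsetP s1); rewrite eA1 !inE eqxx.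
have hq : q \in A4 by apply: (subsetP s1); rewrite eA1 !inE eqxx orbT.
have hr : r \in A4 by apply: (subsetP s3); rewrite eA3 !inE eqxx.
have hs : s \in A4 by apply: (subsetP s3); rewrite eA3 !inE eqxx orbT.
have sz : size (enum A2) = 3%N by rewrite -cardE.
have uA2 := enum_uniq (mem A2).
have mA2 : forall z, z \in enum A2 -> z \in A2 by move=> z; rewrite mem_enum.
move: sz uA2 mA2; case: (enum A2) => [|a [|b [|c [|]]]] // _ uA2 mA2.
have ha : a \in A2 by apply: mA2; rewrite !inE eqxx.
have hb : b \in A2 by apply: mA2; rewrite !inE eqxx ?orbT.
have hc : c \in A2 by apply: mA2; rewrite !inE eqxx ?orbT.
set x := p^-1 * q.
set y := s * r^-1.
have hx : x \in A4 by case: (inA4 _ _ hp hq).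
have hy : y \in A4 by case: (inA4 _ _ hs hr).
have Ginj : injective (Gp x y a b c).
  move=> [[i j] k] [[i' j'] k'] /= E.
  have E2 : (p * (if i then x else 1)) * nth 1 [:: a; b; c] j * ((if k then y else 1) * r)
          = (p * (if i' then x else 1)) * nth 1 [:: a; b; c] j' * ((if k' then y else 1) * r).
    by have := congr1 (fun g => p * g * r) E; rewrite /Gp /= !mulgA.
  have m1 : forall i0 : bool, p * (if i0 then x else 1) \in A1.
    by case; rewrite eA1 !inE ?mulg1 ?eqxx ?orbT // /x mulKVg eqxx orbT.
  have m3 : forall k0 : bool, (if k0 then y else 1) * r \in A3.
    by case; rewrite eA3 !inE ?mul1g ?eqxx ?orbT // /y mulgKV eqxx orbT.
  have m2 : forall j0 : 'I_3, nth 1 [:: a; b; c] j0 \in A2.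
    by case=> [[|[|[|m]]] Hj].
  have [e1 e2 e3] := inj _ _ _ _ _ _ (m1 i) (m2 j) (m3 k) (m1 i') (m2 j') (m3 k') E2.
  have hi : i = i'.
    move/mulgI: e1; destruct i; destruct i' => //= hx1; [|move/esym: hx1 => hx1];
      (have : q = p * x by rewrite /x mulgA mulgV mul1g);
      by rewrite hx1 mulg1 => eq; move: npq; rewrite eq eqxx.
  have hk : k = k'.
    move/mulIg: e3; destruct k; destruct k' => //= hy1; [|move/esym: hy1 => hy1];
      (have : s = y * r by rewrite /y -mulgA mulVg mulg1);
      by rewrite hy1 mul1g => eq; move: nrs; rewrite eq eqxx.
  have hj : j = j'.
    apply: val_inj; apply/eqP; move/eqP: e2.
    by rewrite nth_uniq.
  by rewrite hi hj hk.
have uT : uniq Ts by vm_compute.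
have := map_inj_uniq Ginj Ts; rewrite uT -(map_inj_uniq code_inj) -map_comp.
rewrite (eq_map (codeG x y a b c)).
have := keyP; rewrite /keyb.
move=> /allP /(_ _ (A4_LP _ hx)) /allP /(_ _ (A4_LP _ hy)) /allP /(_ _ (A4_LP _ (subsetP s2 _ ha)))
  /allP /(_ _ (A4_LP _ (subsetP s2 _ hb))) /allP /(_ _ (A4_LP _ (subsetP s2 _ hc))).
by move/negbTE => ->.
Qed.
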